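(* Consider a POMDP with finite state space $\mathcal S$, finite observation space $\mathcal Y$, finite action space $\mathcal A$, transition kernel $P(s'\mid s,a)$, observation kernel $O(y'\mid s',a)$, reward $r\colon\mathcal S\times\mathcal A\to\mathbb R$ and discount $\gamma\in[0,1)$; histories $H_t=(Y_1,A_1,\dots,Y_t)\in\mathcal H_t$. Let $\mathcal Z$ be finite, $f\colon\mathcal Z\times\mathcal Y\times\mathcal A\to\mathcal Z$ a recurrent update with $Z_{t+1}=f(Z_t,Y_{t+1},A_t)$, and write $Z_t=\sigma_t(H_t)$. Let $\pi_{\mathrm{expl}}\colon\mathcal Z\to\Delta(\mathcal A)$ be an exploration policy such that $\{(S_t,Y_t,Z_t,A_t)\}_{t\ge1}$ has a unique stationary distribution $\xi$ with full support. Define $r_\xi(z,a)=\sum_s r(s,a)\xi(s\mid z,a)$, $P_\xi(z'\mid z,a)=\sum_s\xi(s\mid z,a)\sum_{s'}P(s'\mid s,a)\sum_{y'}O(y'\mid s',a)\mathbb 1\{z'=f(z,y',a)\}$, let $Q^\star_\xi$ be the unique fixed point of $Q(z,a)=r_\xi(z,a)+\gamma\sum_{z'}P_\xi(z'\mid z,a)\max_{\tilde a}Q(z',\tilde a)$, $V^\star_\xi(z)=\max_aQ^\star_\xi(z,a)$, $\pi^\star_\xi(z)=\arg\max_aQ^\star_\xi(z,a)$ (deterministic tie-breaking). Let $\mathfrak F$ be any class of real-valued functions on $\mathcal Z$, and define $$\varepsilon_t=\max_{h_t,a_t}\big|\mathbb E[r(S_t,A_t)\mid H_t=h_t,A_t=a_t]-r_\xi(\sigma_t(h_t),a_t)\big|,$$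 $$\delta_t=\max_{h_t,a_t}d_{\mathfrak F}\big(\mathbb P(Z_{t+1}=\cdot\mid H_t=h_t,A_t=a_t),P_\xi(\cdot\mid\sigma_t(h_t),a_t)\big),$$ $\bar\varepsilon_t=(1-\gamma)\sum_{\tau\ge t}\gamma^{\tau-t}\varepsilon_\tau$, $\bar\delta_t=(1-\gamma)\sum_{\tau\ge t}\gamma^{\tau-t}\delta_\tau$. Let $\tilde\pi$ be the history-dependent policy $\tilde\pi_t(h_t)=\pi^\star_\xi(\sigma_t(h_t))$. Let $V^\star_t,Q^\star_t$ be the optimal value and action-value functions of the POMDP and $V^{\tilde\pi}_t$ the value function of $\tilde\pi$. Then for all $t$, $h_t\in\mathcal H_t$, $a_t\in\mathcal A$: $$|Q^\star_t(h_t,a_t)-Q^\star_\xi(\sigma_t(h_t),a_t)|\le(1-\gamma)^{-1}[\bar\varepsilon_t+\gamma\bar\delta_t\rho_{\mathfrak F}(V^\star_\xi)],$$ $$|V^\star_t(h_t)-V^\star_\xi(\sigma_t(h_t))|\le(1-\gamma)^{-1}[\bar\varepsilon_t+\gamma\bar\delta_t\rho_{\mathfrak F}(V^\star_\xi)],$$ $$|V^\star_t(h_t)-V^{\tilde\pi}_t(h_t)|\le2(1-\gamma)^{-1}[\bar\varepsilon_t+\gamma\bar\delta_t\rho_{\mathfrak F}(V^\star_\xi)].$$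
   Context: $d_{\mathfrak F}(\mu,\nu)=\sup_{g\in\mathfrak F}|\int g\,d\mu-\int g\,d\nu|$ is the integral probability metric and $\rho_{\mathfrak F}(g)=\inf\{\rho>0:\rho^{-1}g\in\mathfrak F\}$ the Minkowski functional. $V^\pi_t(h_t)=\mathbb E^\pi[\sum_{\tau\ge t}\gamma^{\tau-t}r(S_\tau,A_\tau)\mid H_t=h_t]$; $V^\star_t,Q^\star_t$ are the value and Q-functions of a policy optimal for all $t$ and histories, with $Q^\pi_t(h_t,a_t)=\mathbb E^\pi[r(S_t,A_t)+\gamma V^\pi_{t+1}(H_{t+1})\mid H_t=h_t,A_t=a_t]$. $\xi(s\mid z,a)$ is the conditional of the stationary distribution. $Q^\star_\xi$ is the almost-sure limit of tabular recurrent Q-learning under the exploration policy. *)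

(* Defs.v *)
From HB Require Import structures.
From mathcomp Require Import all_boot all_order all_algebra.
From mathcomp Require Import all_classical all_reals all_analysis.
Set Implicit Arguments. Unset Strict Implicit. Unset Printing Implicit Defensive.
Import Order.TTheory GRing.Theory Num.Theory numFieldNormedType.Exports.
Local Open Scope classical_set_scope.
Local Open Scope ring_scope.

(* Time is 0-based: index n corresponds to the paper's t = n+1. *)
Section POMDP.
Variable R : realType.
Variables (S Y A Z : finType).

Definition is_dist (T : finType) (p : T -> R) :=
  (forall x, 0 <= p x) /\ \sum_x p x = 1.

Definition maxAct (F : A -> R) : R :=
  match [pick a : A] with Some a0 => \big[Num.max/F a0]_a F a | None => 0 end.

(* history H_{n+1} = (Y_1, A_1, Y_2, ..., A_n, Y_{n+1}):
   first observation and the n (action, next observation) pairs, newest first *)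
Definition hist (n : nat) := (Y * n.-tuple (A * Y))%type.
Definition hext n (h : hist n) (a : A) (y : Y) : hist n.+1 :=
  (h.1, cons_tuple (a, y) h.2).
Definition hprev n (h : hist n.+1) : hist n := (h.1, behead_tuple h.2).

Variables (P : S -> A -> S -> R)   (* P s a s' = P(s' | s, a) *)
          (O : S -> A -> Y -> R)   (* O s' a y' = O(y' | s', a) *)
          (nu : S -> Y -> R)       (* initial joint law of (S_1, Y_1) *)
          (r : S -> A -> R) (gamma : R)
          (f : Z -> Y -> A -> Z)
          (init : Y -> Z).         (* Z_1 = init(Y_1) *)

(* alpha h s = P(H_n = h, S_n = s) with the policy factors removed
   (they do not depend on s and cancel in all conditional probabilities) *)
Fixpoint alpha (n : nat) : hist n -> S -> R :=
  match n return hist n -> S -> R with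
  | 0 => fun h s => nu s h.1
  | m.+1 => fun h s' =>
      let ay := thead h.2 in
      \sum_s alpha (hprev h) s * P s ay.1 s' * O s' ay.1 ay.2
  end.

Fixpoint sigma (n : nat) : hist n -> Z :=
  match n return hist n -> Z with
  | 0 => fun h => init h.1
  | m.+1 => fun h => let ay := thead h.2 in f (sigma (hprev h)) ay.2 ay.1
  end.

(* history has positive probability (under any policy giving positive
   probability to the actions it contains) *)
Definition possible n (h : hist n) : bool := 0 < \sum_s alpha h s.

(* belief P(S_n = s | H_n = h) *)
Definition belief n (h : hist n) (s : S) : R := alpha h s / \sum_s' alpha h s'.

(* E[r(S_n, A_n) | H_n = h, A_n = a] *)
Definition rbar n (h : hist n) (a : A) : R := \sum_s belief h s * r s a.

(* P(Y_{n+1} = y | H_n = h, A_n = a) *)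
Definition py n (h : hist n) (a : A) (y : Y) : R :=
  \sum_s belief h s * \sum_s' P s a s' * O s' a y.

(* P(Z_{n+1} = z | H_n = h, A_n = a) *)
Definition pz n (h : hist n) (a : A) (z : Z) : R :=
  \sum_y py h a y * (f (sigma h) y a == z)%:R.

Definition policy := forall n, hist n -> A -> R.
Definition is_policy (pol : policy) := forall n (h : hist n), is_dist (pol n h).

(* W pol N n h = E^pol[ sum_{k < N} gamma^k r(S_{n+k}, A_{n+k}) | H_n = h ] *)
Fixpoint W (pol : policy) (N : nat) : forall n, hist n -> R :=
  match N with
  | 0 => fun _ _ => 0
  | N'.+1 => fun n h => \sum_a pol n h a *
      (rbar h a + gamma * \sum_y py h a y * W pol N' (hext h a y))
  end.

Definition Vpi (pol : policy) n (h : hist n) : R := limn (fun N => W pol N h).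

Definition Vstar n (h : hist n) : R :=
  sup [set Vpi pol h | pol in [set pol | is_policy pol]].

Definition Qstar n (h : hist n) (a : A) : R :=
  rbar h a + gamma * \sum_y py h a y * Vstar (hext h a y).

Variable piexpl : Z -> A -> R.

Definition is_stationary (xi : S -> Y -> Z -> A -> R) :=
  (forall s y z a, 0 <= xi s y z a) /\
  \sum_s \sum_y \sum_z \sum_a xi s y z a = 1 /\
  forall s' y' z' a', xi s' y' z' a' =
    \sum_s \sum_y \sum_z \sum_a xi s y z a * P s a s' * O s' a y' *
        (f z y' a == z')%:R * piexpl z' a'.

Variable xi : S -> Y -> Z -> A -> R.

Definition xicond (s : S) (z : Z) (a : A) : R :=
  (\sum_y xi s y z a) / (\sum_s' \sum_y xi s' y z a).

Definition rxi (z : Z) (a : A) : R := \sum_s r s a * xicond s z a.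

Definition Pxi (z : Z) (a : A) (z' : Z) : R :=
  \sum_s xicond s z a * \sum_s' P s a s' *
     \sum_y' O s' a y' * (z' == f z y' a)%:R.

Definition is_Qxi (Q : Z -> A -> R) :=
  forall z a, Q z a = rxi z a + gamma * \sum_z' Pxi z a z' * maxAct (Q z').

Definition Vxi (Q : Z -> A -> R) (z : Z) : R := maxAct (Q z).

Definition dF (F : set (Z -> R)) (mu nu' : Z -> R) : \bar R :=
  ereal_sup [set (`| \sum_z g z * mu z - \sum_z g z * nu' z |)%:E | g in F].

Definition rhoF (F : set (Z -> R)) (g : Z -> R) : \bar R :=
  ereal_inf [set x%:E | x in [set x : R | 0 < x /\ F (fun z => x^-1 * g z)]].

Variable F : set (Z -> R).

Definition eps n : \bar R :=
  \big[Order.max/0%E]_(h : hist n | possible h)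
    \big[Order.max/0%E]_(a : A) (`| rbar h a - rxi (sigma h) a |)%:E.

Definition delta n : \bar R :=
  \big[Order.max/0%E]_(h : hist n | possible h)
    \big[Order.max/0%E]_(a : A) dF F (pz h a) (Pxi (sigma h) a).

Definition discbar (x : nat -> \bar R) n : \bar R :=
  ((1 - gamma)%:E * \sum_(0 <= k <oo) ((gamma ^+ k)%:E * x (n + k)%N))%E.

(* product of nonnegative extended reals with the convention 0 * (+oo) = +oo *)
Definition mulinf (x y : \bar R) : \bar R :=
  if (x == +oo%E) || (y == +oo%E) then +oo%E else (x * y)%E.

Definition bound (Q : Z -> A -> R) n : \bar R :=
  ((1 - gamma)^-1%:E *
   (discbar eps n + mulinf gamma%:E (mulinf (discbar delta n) (rhoF F (Vxi Q)))))%E.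

End POMDP.

Definition pol_of_agent (R : realType) (Y A Z : finType)
  (f : Z -> Y -> A -> Z) (init : Y -> Z) (pistar : Z -> A) : policy R Y A :=
  fun n h a => (a == pistar (sigma f init h))%:R.

(* Main.v *)
Require Import Defs.
From HB Require Import structures.
From mathcomp Require Import all_boot all_order all_algebra.
From mathcomp Require Import all_classical all_reals all_analysis.
From mathcomp Require Import ring lra.
Import Order.TTheory GRing.Theory Num.Theory numFieldNormedType.Exports.
Local Open Scope classical_set_scope.
Local Open Scope ring_scope.
Set Implicit Arguments. Unset Strict Implicit.

Section Proof3.
Variables (R : realType) (S Y A Z : finType)
  (P : S -> A -> S -> R) (O : S -> A -> Y -> R) (nu : S -> Y -> R)
  (r : S -> A -> R) (gamma : R)
  (f : Z -> Y -> A -> Z) (init : Y -> Z)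
  (xi : S -> Y -> Z -> A -> R)
  (Qxi : Z -> A -> R) (pistar : Z -> A) (F : set (Z -> R)).
Hypothesis HP : forall s a, is_dist (P s a).
Hypothesis HO : forall s' a, is_dist (O s' a).
Hypothesis Hnu : is_dist (fun sy : S * Y => nu sy.1 sy.2).
Hypothesis Hg0 : 0 <= gamma.
Hypothesis Hg1 : gamma < 1.
Hypothesis HQ : is_Qxi P O r gamma f xi Qxi.
Hypothesis Hpi : forall z, Qxi z (pistar z) = maxAct (Qxi z).

Local Notation al := (alpha P O nu).
Local Notation sg := (sigma f init).
Local Notation bel := (belief P O nu).
Local Notation rb := (rbar P O nu r).
Local Notation pY := (py P O nu).
Local Notation pZ := (pz P O nu f init).
Local Notation poss := (possible P O nu).
Local Notation WW := (W P O nu r gamma).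
Local Notation Vx := (Vxi Qxi).
Local Notation pit := (pol_of_agent R f init pistar).

Lemma elem_le_sum {T : finType} (G : T -> R) i0 :
  (forall i, 0 <= G i) -> G i0 <= \sum_i G i.
Proof.
move=> G0; rewrite (bigD1 i0) //= lerDl; exact: sumr_ge0.
Qed.

Lemma sum_ind {T : finType} (G : T -> R) (w : T) :
  \sum_z G z * (w == z)%:R = G w.
Proof.
rewrite (bigD1 w) //= eqxx mulr1 big1 ?addr0 // => z /negbTE.
by rewrite eq_sym => ->; rewrite mulr0.
Qed.

Lemma sum_ind' {T : finType} (G : T -> R) (w : T) :
  \sum_z (z == w)%:R * G z = G w.
Proof.
rewrite -(sum_ind G w); apply: eq_bigr => z _; by rewrite mulrC eq_sym.
Qed.

Lemma hprev_hext n (h : hist Y A n) a y : hprev (hext h a y) = h.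
Proof. case: h => y0 t; rewrite /hprev /hext /=; congr pair; exact: val_inj. Qed.

Lemma thead_hext n (h : hist Y A n) a y : thead (hext h a y).2 = (a, y).
Proof. by rewrite /hext /= theadE. Qed.

Lemma alpha_hext n (h : hist Y A n) a y s' :
  al (hext h a y) s' = \sum_s al h s * P s a s' * O s' a y.
Proof. by rewrite /= hprev_hext. Qed.

Lemma sigma_hext n (h : hist Y A n) a y : sg (hext h a y) = f (sg h) y a.
Proof. by rewrite /= hprev_hext. Qed.

Lemma alpha_ge0 n (h : hist Y A n) s : 0 <= al h s.
Proof.
elim: n h s => [|n IH] h s /=; first exact: (Hnu.1 (s, h.1)).
apply: sumr_ge0 => s0 _; apply: mulr_ge0; first apply: mulr_ge0 => //.
- exact: (HP _ _).1.
- exact: (HO _ _).1.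
Qed.

Lemma sumalpha_ge0 n (h : hist Y A n) : 0 <= \sum_s al h s.
Proof. by apply: sumr_ge0 => s _; exact: alpha_ge0. Qed.

Lemma belief_ge0 n (h : hist Y A n) s : 0 <= bel h s.
Proof. by rewrite /belief divr_ge0 // ?alpha_ge0 // sumalpha_ge0. Qed.

Lemma sum_belief n (h : hist Y A n) :
  \sum_s bel h s = if poss h then 1 else 0.
Proof.
rewrite /belief -mulr_suml /possible.
case: ifP => [H|H]; first by rewrite mulfV // gt_eqF.
have : \sum_s al h s = 0.
  by apply/eqP; rewrite eq_le sumalpha_ge0 andbT leNgt H.
by move=> ->; rewrite mul0r.
Qed.

Lemma sum_belief_le1 n (h : hist Y A n) : \sum_s bel h s <= 1.
Proof. by rewrite sum_belief; case: ifP. Qed.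

Lemma belief_le1 n (h : hist Y A n) s : bel h s <= 1.
Proof.
apply: le_trans (sum_belief_le1 h); apply: elem_le_sum => i; exact: belief_ge0.
Qed.

Lemma trans_ge0 s a y : 0 <= \sum_s' P s a s' * O s' a y.
Proof. apply: sumr_ge0 => s' _; apply: mulr_ge0; [exact: (HP _ _).1|exact: (HO _ _).1]. Qed.

Lemma py_ge0 n (h : hist Y A n) a y : 0 <= pY h a y.
Proof. apply: sumr_ge0 => s _; apply: mulr_ge0; [exact: belief_ge0|exact: trans_ge0]. Qed.

Lemma sum_py n (h : hist Y A n) a : \sum_y pY h a y = \sum_s bel h s.
Proof.
rewrite /py exchange_big /=; apply: eq_bigr => s _.
rewrite -mulr_sumr exchange_big /=.
rewrite (eq_bigr (fun s' => P s a s')); first by rewrite (HP s a).2 mulr1.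
by move=> s' _; rewrite -mulr_sumr (HO s' a).2 mulr1.
Qed.

Lemma sum_py_le1 n (h : hist Y A n) a : \sum_y pY h a y <= 1.
Proof. by rewrite sum_py sum_belief_le1. Qed.

Lemma possible_hext n (h : hist Y A n) a y :
  poss h -> 0 < pY h a y -> poss (hext h a y).
Proof.
rewrite /possible => Hh Hy.
have -> : \sum_s' al (hext h a y) s' = (\sum_s al h s) * pY h a y.
  rewrite (eq_bigr _ (fun s' _ => alpha_hext h a y s')) exchange_big /=.
  rewrite /py /belief mulr_sumr; apply: eq_bigr => s _.
  rewrite mulrA [X in X * _]mulrCA mulfV ?gt_eqF // mulr1 mulr_sumr.
  by apply: eq_bigr => s' _; rewrite mulrA.
exact: mulr_gt0.
Qed.

Definition Rm := \sum_s \sum_a `|r s a|.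

Lemma rbar_bound n (h : hist Y A n) a : `|rb h a| <= Rm.
Proof.
rewrite /rbar; apply: le_trans (ler_norm_sum _ _ _) _.
apply: le_trans (_ : \sum_s bel h s * Rm <= _).
  apply: ler_sum => s _; rewrite normrM ger0_norm ?belief_ge0 //.
  apply: ler_wpM2l; first exact: belief_ge0.
  apply: le_trans (_ : \sum_a `|r s a| <= _).
    by apply: (@elem_le_sum _ (fun a => `|r s a|) a) => i.
  by apply: (@elem_le_sum _ (fun s => \sum_a `|r s a|) s) => i; apply: sumr_ge0.
rewrite -mulr_suml; apply: ler_piMl; last exact: sum_belief_le1.
by rewrite /Rm; apply: sumr_ge0 => s _; apply: sumr_ge0.
Qed.


Lemma W_S (pol : policy R Y A) N n (h : hist Y A n) :
  WW pol N.+1 h = \sum_a pol n h a *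
      (rb h a + gamma * \sum_y pY h a y * WW pol N (hext h a y)).
Proof. by []. Qed.

Lemma py_avg n (h : hist Y A n) a (D : Y -> R) b : 0 <= b ->
  (forall y, 0 < pY h a y -> D y <= b) -> \sum_y pY h a y * D y <= b.
Proof.
move=> b0 HD; apply: le_trans (_ : \sum_y pY h a y * b <= _).
  apply: ler_sum => y _; have := py_ge0 h a y; rewrite le_eqVlt.
  case/orP => [/eqP <-|Hy]; first by rewrite !mul0r.
  by apply: ler_wpM2l; [exact: ltW|exact: HD].
by rewrite -mulr_suml; apply: ler_piMl => //; exact: sum_py_le1.
Qed.

Lemma py_avg_abs n (h : hist Y A n) a (D : Y -> R) b : 0 <= b ->
  (forall y, 0 < pY h a y -> `|D y| <= b) -> `|\sum_y pY h a y * D y| <= b.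
Proof.
move=> b0 HD; apply: le_trans (ler_norm_sum _ _ _) _.
rewrite (eq_bigr (fun y => pY h a y * `|D y|)); first exact: py_avg.
by move=> y _; rewrite normrM ger0_norm // py_ge0.
Qed.

Lemma pol_avg (p : A -> R) (X : A -> R) b : is_dist p ->
  (forall a, X a <= b) -> \sum_a p a * X a <= b.
Proof.
move=> [p0 p1] HX; apply: le_trans (_ : \sum_a p a * b <= _).
  by apply: ler_sum => a _; apply: ler_wpM2l.
by rewrite -mulr_suml p1 mul1r.
Qed.

Lemma pol_avg_abs (p : A -> R) (X : A -> R) b : is_dist p ->
  (forall a, `|X a| <= b) -> `|\sum_a p a * X a| <= b.
Proof.
move=> [p0 p1] HX; apply: le_trans (ler_norm_sum _ _ _) _.
rewrite (eq_bigr (fun a => p a * `|X a|)); first exact: pol_avg.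
by move=> a _; rewrite normrM ger0_norm.
Qed.

Lemma Rm_ge0 : 0 <= Rm.
Proof. by rewrite /Rm; apply: sumr_ge0 => s _; apply: sumr_ge0. Qed.

Lemma W_diff (pol : policy R Y A) : is_policy pol ->
  forall N n (h : hist Y A n), `|WW pol N.+1 h - WW pol N h| <= Rm * gamma ^+ N.
Proof.
move=> Hpol; elim=> [|N IH] n h.
  rewrite W_S /= subr0 expr0 mulr1; apply: pol_avg_abs => // a.
  by rewrite big1 ?mulr0 ?addr0 ?rbar_bound // => y _; rewrite mulr0.
have -> : WW pol N.+2 h - WW pol N.+1 h = \sum_a pol n h a *
   (gamma * \sum_y pY h a y * (WW pol N.+1 (hext h a y) - WW pol N (hext h a y))).
  rewrite (W_S pol N.+1 h) (W_S pol N h) -sumrB; apply: eq_bigr => a _.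
  rewrite -mulrBr; congr (_ * _).
  rewrite opprD addrACA subrr add0r -mulrBr -sumrB; congr (_ * _).
  by apply: eq_bigr => y _; rewrite mulrBr.
apply: pol_avg_abs => // a; rewrite normrM ger0_norm // exprS mulrCA.
apply: ler_wpM2l => //; apply: py_avg_abs => [|y _]; last exact: IH.
by apply: mulr_ge0; [exact: Rm_ge0|exact: exprn_ge0].
Qed.

Lemma geo_le N : \sum_(k < N) gamma ^+ k <= (1 - gamma)^-1.
Proof.
have g1 : 0 < 1 - gamma by rewrite subr_gt0.
have E : (1 - gamma) * \sum_(k < N) gamma ^+ k = 1 - gamma ^+ N.
  elim: N => [|N IH]; first by rewrite big_ord0 mulr0 expr0 subrr.
  by rewrite big_ord_recr /= mulrDr IH exprS; ring.
rewrite -[X in X <= _](mulKf (lt0r_neq0 g1)) E.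
rewrite -[X in _ <= X]mulr1; apply: ler_wpM2l; first by rewrite invr_ge0 ltW.
by rewrite lerBlDr lerDl exprn_ge0.
Qed.

Lemma geo_ge0 N : 0 <= \sum_(k < N) gamma ^+ k.
Proof. by apply: sumr_ge0 => k _; exact: exprn_ge0. Qed.

Lemma geoS N : \sum_(k < N.+1) gamma ^+ k = \sum_(k < N) gamma ^+ k + gamma ^+ N.
Proof. by rewrite big_ord_recr. Qed.

Lemma W_bound (pol : policy R Y A) : is_policy pol ->
  forall N n (h : hist Y A n), `|WW pol N h| <= Rm * \sum_(k < N) gamma ^+ k.
Proof.
move=> Hpol; elim=> [|N IH] n h; first by rewrite big_ord0 mulr0 normr0.
rewrite geoS mulrDr.
rewrite -[WW pol N.+1 h](subrK (WW pol N h)).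
apply: le_trans (ler_normD _ _) _; rewrite addrC.
by apply: lerD; [exact: IH|exact: W_diff].
Qed.

Lemma W_cvg (pol : policy R Y A) : is_policy pol ->
  forall n (h : hist Y A n), cvgn (fun N => WW pol N h).
Proof.
move=> Hpol n h.
set g := fun N => Rm * \sum_(k < N) gamma ^+ k.
set u := fun N => WW pol N h + g N.
have gS N : g N.+1 = g N + Rm * gamma ^+ N.
  by rewrite /g geoS mulrDr.
have gB N : g N <= Rm * (1 - gamma)^-1.
  by apply: ler_wpM2l; [exact: Rm_ge0|exact: geo_le].
have cu : cvgn u.
  apply: nondecreasing_is_cvgn.
    apply/nondecreasing_seqP => N; rewrite /u gS.
    have := W_diff Hpol N h; rewrite ler_norml => /andP[H _]; lra.
  exists (2 * (Rm * (1 - gamma)^-1)) => _ [N _ <-].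
  have H1 : `|WW pol N h| <= g N := W_bound Hpol N h.
  have H2 := gB N; have H3 := ler_norm (WW pol N h); rewrite /u; lra.
have cg : cvgn g.
  apply: nondecreasing_is_cvgn.
    apply/nondecreasing_seqP => N; rewrite gS lerDl.
    by apply: mulr_ge0; [exact: Rm_ge0|exact: exprn_ge0].
  by exists (Rm * (1 - gamma)^-1) => _ [N _ <-].
have -> : (fun N => WW pol N h) = (fun N => u N - g N).
  by apply: funext => N; rewrite /u addrK.
exact: is_cvgB.
Qed.

Local Notation rx := (rxi r xi).
Local Notation Px := (Pxi P O f xi).

Definition ee k : R := \big[Num.max/0]_(h : hist Y A k | poss h)
  \big[Num.max/0]_(a : A) `|rb h a - rx (sg h) a|.

Definition tt k : R := \big[Num.max/0]_(h : hist Y A k | poss h)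
  \big[Num.max/0]_(a : A)
     `|\sum_z Vx z * pZ h a z - \sum_z Vx z * Px (sg h) a z|.

Definition cc k := ee k + gamma * tt k.
Definition PS m N := \sum_(k < N) gamma ^+ k * cc (m + k).
Definition Mv := \sum_z `|Vx z|.

Lemma eps_ee k : eps P O nu r f init xi k = (ee k)%:E.
Proof.
rewrite /ee (big_morph _ EFin_max (erefl _)); apply: eq_bigr => h _.
by rewrite (big_morph _ EFin_max (erefl _)).
Qed.

Lemma ee_ge n (h : hist Y A n) a : poss h -> `|rb h a - rx (sg h) a| <= ee n.
Proof.
move=> Hh; apply: le_trans (le_bigmax_cond _ _ Hh).
exact: (le_bigmax _ (fun a => `|rb h a - rx (sg h) a|)).
Qed.

Lemma ee_ge0 k : 0 <= ee k.
Proof. exact: bigmax_ge_id. Qed.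

Lemma tt_ge n (h : hist Y A n) a : poss h ->
  `|\sum_z Vx z * pZ h a z - \sum_z Vx z * Px (sg h) a z| <= tt n.
Proof.
move=> Hh; apply: le_trans (le_bigmax_cond _ _ Hh).
exact: (le_bigmax _ (fun a => `|\sum_z Vx z * pZ h a z - \sum_z Vx z * Px (sg h) a z|)).
Qed.

Lemma tt_ge0 k : 0 <= tt k.
Proof. exact: bigmax_ge_id. Qed.

Lemma cc_ge0 k : 0 <= cc k.
Proof. by rewrite /cc addr_ge0 ?ee_ge0 // mulr_ge0 // tt_ge0. Qed.

Lemma PS_S m N : PS m N.+1 = cc m + gamma * PS m.+1 N.
Proof.
rewrite /PS big_ord_recl /= expr0 mul1r addn0 mulr_sumr; congr (_ + _).
by apply: eq_bigr => i _; rewrite /bump /= add1n exprS -mulrA addSnnS.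
Qed.

Lemma PS_0 m : PS m 0 = 0.
Proof. by rewrite /PS big_ord0. Qed.

Lemma PS_ge0 m N : 0 <= PS m N.
Proof. by apply: sumr_ge0 => k _; apply: mulr_ge0; [exact: exprn_ge0|exact: cc_ge0]. Qed.

Lemma Vx_le z : `|Vx z| <= Mv.
Proof. exact: (@elem_le_sum _ (fun z => `|Vx z|) z). Qed.

Lemma maxAct_ge (G : A -> R) a : G a <= maxAct G.
Proof.
rewrite /maxAct; case: pickP => [a0 _|H]; last by have := H a.
exact: (le_bigmax _ G a).
Qed.

Lemma step n (h : hist Y A n) a (X : hist Y A n.+1 -> R) :
  rb h a + gamma * \sum_y pY h a y * X (hext h a y) - Qxi (sg h) a =
  (rb h a - rx (sg h) a)
  + gamma * \sum_y pY h a y * (X (hext h a y) - Vx (sg (hext h a y)))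
  + gamma * (\sum_z Vx z * pZ h a z - \sum_z Vx z * Px (sg h) a z).
Proof.
have E1 : \sum_z Vx z * pZ h a z = \sum_y pY h a y * Vx (sg (hext h a y)).
  rewrite /pz; under eq_bigr do rewrite mulr_sumr.
  rewrite exchange_big /=; apply: eq_bigr => y _.
  rewrite ?hprev_hext ?sigma_hext -(sum_ind (Vx) (f (sg h) y a)) mulr_sumr.
  by apply: eq_bigr => z _; rewrite mulrCA.
have E2 : \sum_z Vx z * Px (sg h) a z =
    \sum_z' Px (sg h) a z' * maxAct (Qxi z').
  by apply: eq_bigr => z _; rewrite mulrC.
have E3 : \sum_y pY h a y * (X (hext h a y) - Vx (sg (hext h a y))) =
   \sum_y pY h a y * X (hext h a y) - \sum_y pY h a y * Vx (sg (hext h a y)).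
  by rewrite -sumrB; apply: eq_bigr => y _; rewrite mulrBr.
rewrite (HQ (sg h) a) E1 E2 E3; ring.
Qed.

Lemma W_upper (pol : policy R Y A) : is_policy pol ->
  forall N m (h : hist Y A m), poss h ->
  WW pol N h - Vx (sg h) <= PS m N + Mv * gamma ^+ N.
Proof.
move=> Hpol; elim=> [|N IH] m h Hh.
  rewrite PS_0 expr0 mulr1 /=; have := Vx_le (sg h).
  by rewrite ler_norml => /andP[H1 H2]; lra.
rewrite W_S -[Vx (sg h)]mul1r -(Hpol m h).2 mulr_suml -sumrB.
rewrite (eq_bigr (fun a => pol m h a * (rb h a + gamma * \sum_y pY h a y
    * WW pol N (hext h a y) - Vx (sg h)))); last by move=> a _; rewrite mulrBr.
apply: pol_avg => // a.
have H0 := maxAct_ge (Qxi (sg h)) a.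
have H1 := step h a (fun h' => WW pol N h').
have H2 := ler_normlW (ee_ge a Hh).
have H3 := ler_normlW (tt_ge a Hh).
have H4 : \sum_y pY h a y * (WW pol N (hext h a y) - Vx (sg (hext h a y)))
    <= PS m.+1 N + Mv * gamma ^+ N.
  apply: py_avg => [|y Hy]; last by apply: IH; exact: possible_hext.
  by apply: addr_ge0; [exact: PS_ge0|apply: mulr_ge0; [apply: le_trans (Vx_le (sg h))|exact: exprn_ge0]].
have H5 := ler_wpM2l Hg0 H4.
have H6 := ler_wpM2l Hg0 H3.
rewrite PS_S /cc exprS /Vxi.
rewrite /Vxi in H1 H4 H5 H6.
nra.
Qed.

Lemma pit_policy : is_policy pit.
Proof.
move=> n h; split=> [a|]; first by rewrite /pol_of_agent ler0n.
rewrite /pol_of_agent -[RHS](sum_ind' (fun _ => 1) (pistar (sg h))).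
by apply: eq_bigr => a _; rewrite mulr1.
Qed.

Lemma W_lower_pit N m (h : hist Y A m) : poss h ->
  Vx (sg h) - WW pit N h <= PS m N + Mv * gamma ^+ N.
Proof.
elim: N m h => [|N IH] m h Hh.
  rewrite PS_0 expr0 mulr1 /=; have := Vx_le (sg h).
  by rewrite ler_norml => /andP[H1 H2]; lra.
rewrite W_S /pol_of_agent sum_ind'.
set a := pistar (sg h).
have H0 : Vx (sg h) = Qxi (sg h) a by rewrite /Vxi Hpi.
have H1 := step h a (fun h' => WW pit N h').
have H2 := ler_normlW (ee_ge a Hh).
have H2' : - (rb h a - rx (sg h) a) <= ee m.
  by apply: ler_normlW; rewrite normrN; exact: ee_ge.
have H3 : - (\sum_z Vx z * pZ h a z - \sum_z Vx z * Px (sg h) a z) <= tt m.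
  by apply: ler_normlW; rewrite normrN; exact: tt_ge.
have H4 : \sum_y pY h a y * (Vx (sg (hext h a y)) - WW pit N (hext h a y))
    <= PS m.+1 N + Mv * gamma ^+ N.
  apply: py_avg => [|y Hy]; last by apply: IH; exact: possible_hext.
  by apply: addr_ge0; [exact: PS_ge0|apply: mulr_ge0; [apply: le_trans (Vx_le (sg h))|exact: exprn_ge0]].
have E : \sum_y pY h a y * (WW pit N (hext h a y) - Vx (sg (hext h a y))) =
   - \sum_y pY h a y * (Vx (sg (hext h a y)) - WW pit N (hext h a y)).
  by rewrite -sumrN; apply: eq_bigr => y _; rewrite -mulrN opprB.
rewrite E in H1.
have H5 := ler_wpM2l Hg0 H4.
have H6 := ler_wpM2l Hg0 H3.
rewrite PS_S /cc exprS H0.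
nra.
Qed.

Lemma geo_cvg (c : R) : (fun N => c + Mv * gamma ^+ N) @ \oo --> c.
Proof.
rewrite -[X in _ --> X]addr0; apply: cvgD; first exact: cvg_cst.
by apply: (cvg_geometric Mv); rewrite ger0_norm.
Qed.

Lemma geo_cvg' (c : R) : (fun N => c - Mv * gamma ^+ N) @ \oo --> c.
Proof.
rewrite -[X in _ --> X]subr0; apply: cvgB; first exact: cvg_cst.
by apply: (cvg_geometric Mv); rewrite ger0_norm.
Qed.

Lemma Vpi_upper (pol : policy R Y A) : is_policy pol ->
  forall m (h : hist Y A m) b, poss h -> (forall N, PS m N <= b) ->
  Vpi P O nu r gamma pol h - Vx (sg h) <= b.
Proof.
move=> Hpol m h b Hh Hb; rewrite lerBlDr.
have E : limn (fun N => b + Vx (sg h) + Mv * gamma ^+ N) = b + Vx (sg h).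
  by apply: cvg_lim; [exact: Rhausdorff|exact: geo_cvg].
rewrite /Vpi -E; apply: ler_lim.
- exact: W_cvg.
- by apply/cvg_ex; eexists; exact: geo_cvg.
- apply: nearW => N; have := W_upper Hpol N Hh; have := Hb N; lra.
Qed.

Lemma Vpi_lower_pit m (h : hist Y A m) b : poss h -> (forall N, PS m N <= b) ->
  Vx (sg h) - Vpi P O nu r gamma pit h <= b.
Proof.
move=> Hh Hb; rewrite lerBlDr addrC -lerBlDr.
have E : limn (fun N => Vx (sg h) - b - Mv * gamma ^+ N) = Vx (sg h) - b.
  by apply: cvg_lim; [exact: Rhausdorff|exact: geo_cvg'].
rewrite /Vpi -E; apply: ler_lim.
- by apply/cvg_ex; eexists; exact: geo_cvg'.
- exact: W_cvg pit_policy _ _.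
- apply: nearW => N; have := W_lower_pit N Hh; have := Hb N; lra.
Qed.

Lemma Vpit_bound m (h : hist Y A m) b : poss h -> (forall N, PS m N <= b) ->
  `|Vx (sg h) - Vpi P O nu r gamma pit h| <= b.
Proof.
move=> Hh Hb; rewrite ler_norml; apply/andP; split.
  have := Vpi_upper pit_policy Hh Hb; lra.
exact: Vpi_lower_pit.
Qed.

Lemma Vstar_bound m (h : hist Y A m) b : poss h -> (forall N, PS m N <= b) ->
  `|Vstar P O nu r gamma h - Vx (sg h)| <= b.
Proof.
move=> Hh Hb.
set E := [set Vpi P O nu r gamma pol h | pol in [set pol | is_policy pol]].
have Eub : ubound E (b + Vx (sg h)).
  move=> _ [pol Hpol <-]; have := Vpi_upper Hpol Hh Hb; lra.
have Ein : E (Vpi P O nu r gamma pit h) by exists pit => //; exact: pit_policy.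
have H1 : Vstar P O nu r gamma h <= b + Vx (sg h).
  by apply: ge_sup => //; exists (Vpi P O nu r gamma pit h).
have H2 : Vpi P O nu r gamma pit h <= Vstar P O nu r gamma h.
  by apply: ub_le_sup => //; exists (b + Vx (sg h)).
have H3 := Vpi_lower_pit Hh Hb.
rewrite ler_norml; apply/andP; split; lra.
Qed.

Lemma Q_bound n (h : hist Y A n) a beta : poss h -> (forall N, PS n N <= beta) ->
  `|Qstar P O nu r gamma h a - Qxi (sg h) a| <= beta.
Proof.
move=> Hh Hb; rewrite /Qstar (step h a (fun h' => Vstar P O nu r gamma h')).
set D := \sum_y _ * _.
have HD : gamma * `|D| <= beta - cc n.
  have [g0|gp] := eqVneq gamma 0.
    rewrite g0 mul0r subr_ge0; have := Hb 1%N; rewrite PS_S PS_0 g0; lra.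
  have gp' : 0 < gamma by rewrite lt_def gp Hg0.
  rewrite -ler_pdivlMl //; apply: py_avg_abs => [|y Hy].
    rewrite ler_pdivlMl // mulr0; have := Hb 1%N; rewrite PS_S PS_0; lra.
  apply: Vstar_bound; first exact: possible_hext.
  move=> N; rewrite ler_pdivlMl //; have := Hb N.+1; rewrite PS_S; lra.
have H2 := ee_ge a Hh.
have H3 := tt_ge a Hh.
apply: le_trans (ler_normD _ _) _.
apply: le_trans (lerD (ler_normD _ _) (lexx _)) _.
rewrite !normrM ger0_norm //.
have H6 := ler_wpM2l Hg0 H3.
move: HD; rewrite /cc; lra.
Qed.

Local Notation del := (delta P O nu f init xi F).
Local Notation rho := (rhoF F (Vxi Qxi)).

Lemma del_ge0 k : (0 <= del k)%E.
Proof. exact: bigmax_ge_id. Qed.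

Lemma rho_ge0 : (0 <= rho)%E.
Proof.
apply: le_ereal_inf_tmp => _ [x [x0 _] <-]; rewrite lee_fin; exact: ltW.
Qed.

Lemma mulinf_ge0 (x y : \bar R) : (0 <= x)%E -> (0 <= y)%E -> (0 <= mulinf x y)%E.
Proof. by move=> x0 y0; rewrite /mulinf; case: ifP => _ //; exact: mule_ge0. Qed.

Lemma dF_le k (h : hist Y A k) a : poss h ->
  (dF F (pZ h a) (Px (sg h) a) <= del k)%E.
Proof.
move=> Hh; apply: le_trans (le_bigmax_cond _ _ Hh).
exact: (le_bigmax _ (fun a => dF F (pZ h a) (Px (sg h) a))).
Qed.

Lemma TT k dd p : del k = dd%:E -> rho = p%:E -> tt k <= dd * p.
Proof.
move=> Hd Hr.
have dd0 : 0 <= dd by rewrite -lee_fin -Hd del_ge0.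
have p0 : 0 <= p by rewrite -lee_fin -Hr rho_ge0.
apply: bigmax_le => [|h Hh]; first exact: mulr_ge0.
apply: bigmax_le => [|a _]; first exact: mulr_ge0.
set s := `|_|.
have Hx : forall x, 0 < x -> F (fun z => x^-1 * Vx z) -> s <= x * dd.
  move=> x x0 Fx; rewrite -ler_pdivrMl //.
  rewrite -lee_fin -Hd; apply: le_trans (dF_le a Hh).
  apply: ereal_sup_ubound; exists (fun z => x^-1 * Vx z) => //.
  have xi0 : 0 <= x^-1 by rewrite invr_ge0 ltW.
  rewrite /s -[in RHS](ger0_norm xi0) -normrM mulrBr !mulr_sumr.
  by congr (`|_ - _|)%:E; apply: eq_bigr => z _; rewrite mulrA.
have [d0|dp] := eqVneq dd 0.
  have [[x [x0 Fx]]|Hn] := pselect (exists x, 0 < x /\ F (fun z => x^-1 * Vx z)).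
    by rewrite d0 mul0r; have := Hx x x0 Fx; rewrite d0 mulr0.
  exfalso; move: Hr; rewrite /rhoF.
  have -> : [set x%:E | x in [set x : R | 0 < x /\ F (fun z => x^-1 * Vxi Qxi z)]] = set0.
    by apply/seteqP; split => // t [x [x0 Fx] _]; exfalso; apply: Hn; exists x.
  by rewrite ereal_inf0.
have ddp : 0 < dd by rewrite lt_def dp dd0.
rewrite mulrC -ler_pdivrMr //; rewrite -lee_fin -Hr.
apply: le_ereal_inf_tmp => _ [x [x0 Fx] <-]; rewrite lee_fin ler_pdivrMr //.
exact: Hx.
Qed.

Lemma partial_le (u : nat -> \bar R) N : (forall i, 0 <= u i)%E ->
  (\sum_(k < N) u k <= \sum_(0 <= k <oo) u k)%E.
Proof.
move=> u0; rewrite -(big_mkord xpredT); exact: nneseries_lim_ge.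
Qed.

Lemma term_le (u : nat -> \bar R) k : (forall i, 0 <= u i)%E ->
  (u k <= \sum_(0 <= k <oo) u k)%E.
Proof.
move=> u0; apply: le_trans (partial_le k.+1 u0).
rewrite big_ord_recr /= -[X in (X <= _)%E]add0e; apply: leeD => //.
exact: sume_ge0.
Qed.

Lemma PS_split n N : PS n N = \sum_(k < N) gamma ^+ k * ee (n + k)
   + gamma * \sum_(k < N) gamma ^+ k * tt (n + k).
Proof.
rewrite /PS /cc mulr_sumr -big_split; apply: eq_bigr => k _ /=; ring.
Qed.

Lemma PS_bound n N :
  ((PS n N)%:E <= bound P O nu r gamma f init xi F Qxi n)%E.
Proof.
set EE := (\sum_(0 <= k <oo) ((gamma ^+ k)%:E * eps P O nu r f init xi (n + k)))%E.
set DD := (\sum_(0 <= k <oo) ((gamma ^+ k)%:E * del (n + k)))%E.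
have u1 : forall i, (0 <= (gamma ^+ i)%:E * eps P O nu r f init xi (n + i))%E.
  by move=> i; rewrite eps_ee -EFinM lee_fin mulr_ge0 ?exprn_ge0 ?ee_ge0.
have u2 : forall i, (0 <= (gamma ^+ i)%:E * del (n + i))%E.
  by move=> i; apply: mule_ge0; [rewrite lee_fin exprn_ge0|exact: del_ge0].
have EE0 : (0 <= EE)%E by apply: nneseries_ge0 => i _ _.
have DD0 : (0 <= DD)%E by apply: nneseries_ge0 => i _ _.
have g1 : 0 < 1 - gamma by rewrite subr_gt0.
have M2_0 : (0 <= mulinf gamma%:E (mulinf ((1 - gamma)%:E * DD) rho))%E.
  apply: mulinf_ge0; first by rewrite lee_fin.
  apply: mulinf_ge0; last exact: rho_ge0.
  by apply: mule_ge0 => //; rewrite lee_fin ltW.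
rewrite /bound /discbar -/EE -/DD.
rewrite ge0_muleDr //; last by apply: mule_ge0 => //; rewrite lee_fin ltW.
rewrite muleA -EFinM mulVf ?gt_eqF // mul1e.
rewrite PS_split EFinD; apply: leeD.
  apply: le_trans (partial_le N u1); rewrite -sumEFin.
  by apply: lee_sum => k _; rewrite eps_ee EFinM.
have [g0|gp] := eqVneq gamma 0.
  rewrite g0 mul0r; apply: mule_ge0; first by rewrite lee_fin invr_ge0 ltW.
  by rewrite -g0.
have gp' : 0 < gamma by rewrite lt_def gp Hg0.
set X := mulinf ((1 - gamma)%:E * DD) rho.
have [HX|HX] := eqVneq X +oo%E.
  rewrite /mulinf HX eqxx orbT gt0_muley ?leey //.
  by rewrite lte_fin invr_gt0.
have [HD Hr] : ((1 - gamma)%:E * DD != +oo)%E /\ (rho != +oo)%E.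
  by move: HX; rewrite /X /mulinf; case: ifP => // /norP.
have EX : X = ((1 - gamma)%:E * DD * rho)%E.
  by rewrite /X /mulinf (negbTE HD) (negbTE Hr).
have Hg : (gamma%:E != +oo)%E by [].
rewrite /mulinf (negbTE Hg) (negbTE HX) /= EX.
have DDf : DD \is a fin_num.
  rewrite ge0_fin_numE // ltey; apply: contra HD => /eqP ->.
  by rewrite gt0_muley // lte_fin.
have rf : rho \is a fin_num by rewrite ge0_fin_numE ?rho_ge0 // ltey.
rewrite -(fineK DDf) -(fineK rf) -!EFinM lee_fin.
set d := fine DD; set p := fine rho.
have -> : (1 - gamma)^-1 * (gamma * ((1 - gamma) * d * p)) = gamma * (d * p).
  by field; rewrite gt_eqF.
apply: ler_wpM2l; first exact: ltW gp'.
have delf : forall k, del (n + k) \is a fin_num.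
  move=> k; rewrite ge0_fin_numE ?del_ge0 // ltey; apply/negP => /eqP Hinf.
  have := term_le k u2; rewrite /= Hinf gt0_muley ?lte_fin ?exprn_gt0 //.
  by rewrite leye_eq -/DD; apply/negP; rewrite -ltey -ge0_fin_numE.
apply: le_trans (_ : \sum_(k < N) gamma ^+ k * (fine (del (n + k)) * p) <= _).
  apply: ler_sum => k _; apply: ler_wpM2l; first exact: exprn_ge0.
  by apply: TT; rewrite fineK.
have -> : \sum_(k < N) gamma ^+ k * (fine (del (n + k)) * p) =
    (\sum_(k < N) gamma ^+ k * fine (del (n + k))) * p.
  by rewrite mulr_suml; apply: eq_bigr => k _; rewrite mulrA.
rewrite mulrC [d * p]mulrC; apply: ler_wpM2l; first by rewrite /p -lee_fin fineK ?rho_ge0.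
rewrite -lee_fin /d fineK // -sumEFin.
apply: le_trans (partial_le N u2); apply: lee_sum => k _.
by rewrite EFinM fineK.
Qed.

Lemma main n (h : hist Y A n) a : poss h ->
  let B := bound P O nu r gamma f init xi F Qxi n in
  [/\ ((`| Qstar P O nu r gamma h a - Qxi (sg h) a |)%:E <= B)%E,
      ((`| Vstar P O nu r gamma h - Vxi Qxi (sg h) |)%:E <= B)%E &
      ((`| Vstar P O nu r gamma h
           - Vpi P O nu r gamma pit h |)%:E
         <= 2%:E * B)%E].
Proof.
move=> Hh; cbv zeta; have := PS_bound n.
case: (bound P O nu r gamma f init xi F Qxi n) => [beta| |] HB.
- have Hb : forall N, PS n N <= beta by move=> N; rewrite -lee_fin; exact: HB.
  split; rewrite ?lee_fin.
  + exact: Q_bound.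
  + exact: Vstar_bound.
  + rewrite ?lee_fin.
    have H1 := Vstar_bound Hh Hb; have H2 := Vpit_bound Hh Hb.
    have := ler_normD (Vstar P O nu r gamma h - Vx (sg h))
       (Vx (sg h) - Vpi P O nu r gamma pit h).
    rewrite addrA subrK; lra.
- by split; rewrite ?leey // gt0_muley ?leey // lte_fin.
- by have := HB 0%N; rewrite PS_0 leeNy_eq.
Qed.

End Proof3.

Theorem theorem3 (R : realType) (S Y A Z : finType)
  (P : S -> A -> S -> R) (O : S -> A -> Y -> R) (nu : S -> Y -> R)
  (r : S -> A -> R) (gamma : R)
  (f : Z -> Y -> A -> Z) (init : Y -> Z)
  (piexpl : Z -> A -> R) (xi : S -> Y -> Z -> A -> R)
  (Qxi : Z -> A -> R) (pistar : Z -> A) (F : set (Z -> R)) :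
  (forall s a, is_dist (P s a)) ->
  (forall s' a, is_dist (O s' a)) ->
  is_dist (fun sy : S * Y => nu sy.1 sy.2) ->
  0 <= gamma < 1 ->
  (forall z, is_dist (piexpl z)) ->
  is_stationary P O f piexpl xi ->
  (forall xi', is_stationary P O f piexpl xi' -> xi' = xi) ->
  (forall s y z a, 0 < xi s y z a) ->
  is_Qxi P O r gamma f xi Qxi ->
  (forall z, Qxi z (pistar z) = maxAct (Qxi z)) ->
  forall (n : nat) (h : hist Y A n) (a : A), possible P O nu h ->
  let B := bound P O nu r gamma f init xi F Qxi n in
  [/\ ((`| Qstar P O nu r gamma h a - Qxi (sigma f init h) a |)%:E <= B)%E,
      ((`| Vstar P O nu r gamma h - Vxi Qxi (sigma f init h) |)%:E <= B)%E &
      ((`| Vstar P O nu r gamma h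
           - Vpi P O nu r gamma (pol_of_agent R f init pistar) h |)%:E
         <= 2%:E * B)%E].
Proof.
move=> HP HO Hnu /andP[Hg0 Hg1] _ _ _ _ HQ Hpi n h a Hh.
exact: (main init F HP HO Hnu Hg0 Hg1 HQ Hpi a Hh).
Qed.
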